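(* Let $\mathcal X\subseteq[0,1]$ be a Borel set with $0,1\in\mathcal X$, fix $\mu\in(0,1)$ and let $I_\mu=[(\mu-1)^{-1},\mu^{-1}]$. For $\lambda\in I_\mu$ let $E_\lambda(x)=1+\lambda(x-\mu)$ and for $\alpha\in\mathbb R$ let $E^{\mathrm H}_\alpha(x)=e^{\alpha(x-\mu)-\alpha^2/8}$, for $x\in\mathcal X$. Then for each $\alpha\in\mathbb R$ there is $\lambda_\alpha\in I_\mu$ such that $E_{\lambda_\alpha}(x)\ge E^{\mathrm H}_\alpha(x)$ for all $x\in\mathcal X$. On the other hand, for any non-zero $\lambda\in I_\mu$ and every $\alpha\in\mathbb R$, there is at least one point $x_\alpha\in\mathcal X$ such that $E^{\mathrm H}_\alpha(x_\alpha)<E_\lambda(x_\alpha)$. *)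

(* Defs.v *)
From HB Require Import structures.
From mathcomp Require Import all_boot all_order all_algebra.
From mathcomp Require Import all_classical all_reals all_analysis.
Set Implicit Arguments. Unset Strict Implicit. Unset Printing Implicit Defensive.
Import Order.TTheory GRing.Theory Num.Theory.
Local Open Scope ring_scope.
Local Open Scope classical_set_scope.

Definition E_lin (R : realType) (mu lambda x : R) : R := 1 + lambda * (x - mu).

Definition E_hoef (R : realType) (mu alpha x : R) : R :=
  expR (alpha * (x - mu) - alpha ^+ 2 / 8).

Definition I_mu (R : realType) (mu : R) : set R := `[(mu - 1)^-1, mu^-1].

Definition borel_set (R : realType) (A : set R) : Prop :=
  @measurable _ (measurableTypeR R) A.

(* Main.v *)
Require Import Defs.
From HB Require Import structures.
From mathcomp Require Import all_boot all_order all_algebra.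
From mathcomp Require Import all_classical all_reals all_analysis.
From mathcomp Require Import ring lra.
Import Order.TTheory GRing.Theory Num.Theory numFieldNormedType.Exports.
Local Open Scope ring_scope.
Local Open Scope classical_set_scope.
Set Implicit Arguments. Unset Strict Implicit.

Lemma der_cont (R : realType) (f df : R -> R) :
  (forall x : R, is_derive x (1:R) f (df x)) -> continuous f.
Proof.
move=> h x; apply/differentiable_continuous/derivable1_diffP.
exact: ex_derive.
Qed.

Lemma incr_der (R : realType) (f df : R -> R) a b :
  (forall x : R, is_derive x (1:R) f (df x)) ->
  (forall x, a < x < b -> 0 < df x) -> a < b -> f a < f b.
Proof.
move=> hd hp ab.
apply: (@gtr0_derive1_lt_cc _ f a b).
- move=> x _; exact: ex_derive.
- move=> x; rewrite in_itv /= => hx; rewrite derive1E derive_val; exact: hp.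
- apply: continuous_subspaceT; exact: der_cont hd.
- by rewrite in_itv /= lexx ltW.
- by rewrite in_itv /= lexx ltW.
- exact ab.
Qed.

Lemma decr_der (R : realType) (f df : R -> R) a b :
  (forall x : R, is_derive x (1:R) f (df x)) ->
  (forall x, a < x < b -> df x < 0) -> a < b -> f b < f a.
Proof.
move=> hd hp ab.
apply: (@ltr0_derive1_lt_cc _ f a b).
- move=> x _; exact: ex_derive.
- move=> x; rewrite in_itv /= => hx; rewrite derive1E derive_val; exact: hp.
- apply: continuous_subspaceT; exact: der_cont hd.
- by rewrite in_itv /= lexx ltW.
- by rewrite in_itv /= lexx ltW.
- exact ab.
Qed.

Lemma incr_except (R : realType) (f df : R -> R) c :
  (forall x : R, is_derive x (1:R) f (df x)) ->
  (forall x, x != c -> 0 < df x) -> forall x y, x < y -> f x < f y.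
Proof.
move=> hd hp x y xy.
have [cx|xc] := leP c x.
  apply: incr_der hd _ xy => z /andP[xz _]; apply: hp.
  by rewrite gt_eqF // (le_lt_trans cx xz).
have [yc|cy] := leP y c.
  apply: incr_der hd _ xy => z /andP[_ zy]; apply: hp.
  by rewrite lt_eqF // (lt_le_trans zy yc).
apply: (@lt_trans _ _ (f c)).
  apply: incr_der hd _ xc => z /andP[_ zy]; apply: hp; by rewrite lt_eqF.
apply: incr_der hd _ cy => z /andP[zy _]; apply: hp; by rewrite gt_eqF.
Qed.

Definition D {R : realType} (mu u : R) := 1 - mu + mu * expR u.
Definition H {R : realType} (mu u : R) := u ^+ 2 / 8 + mu * u - ln (D mu u).
Definition q {R : realType} (mu u : R) := u / 4 + mu - 1 + (1 - mu) * (D mu u)^-1.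
Definition dq {R : realType} (mu u : R) :=
  4^-1 - (1 - mu) * (mu * expR u) / (D mu u) ^+ 2.

Lemma D_gt0 (R : realType) (mu u : R) : 0 < mu -> mu < 1 -> 0 < D mu u.
Proof. rewrite /D => m0 m1; have := mulr_gt0 m0 (expR_gt0 u); lra. Qed.

Lemma D_der (R : realType) (mu u : R) : is_derive u (1:R) (D mu) (mu * expR u).
Proof.
rewrite /D; apply: is_derive_eq.
by rewrite add0r mul1r.
Qed.

Lemma H_der (R : realType) (mu u : R) : 0 < mu -> mu < 1 ->
  is_derive u (1:R) (H mu) (q mu u).
Proof.
move=> m0 m1.
have hl : is_derive u (1:R) (@ln R \o D mu) ((D mu u)^-1 * (mu * expR u)).
  apply: is_derive1_comp; last exact: D_der.
  exact: is_derive1_ln (D_gt0 u m0 m1).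
have -> : H mu = (fun u => u ^+ 2 / 8 + mu * u - (@ln R \o D mu) u) by [].
apply: is_derive_eq.
rewrite !scaler0 add0r /GRing.scale /= !mulr1.
rewrite /q.
have := D_gt0 u m0 m1. rewrite /D => hD.
field. lra.
Qed.

Lemma q_der (R : realType) (mu u : R) : 0 < mu -> mu < 1 ->
  is_derive u (1:R) (q mu) (dq mu u).
Proof.
move=> m0 m1.
have hD := D_gt0 u m0 m1.
have hv : is_derive u (1:R) (fun y => (D mu y)^-1)
   (- (D mu u) ^- 2 *: (mu * expR u)).
  apply: is_deriveV; first by rewrite gt_eqF.
  exact: D_der.
have -> : q mu = (fun u => u / 4 + mu - 1 + (1 - mu) * (fun y => (D mu y)^-1) u) by [].
apply: is_derive_eq.
rewrite /GRing.scale /= /dq.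
move: hD; rewrite /D => hD.
field. lra.
Qed.

Lemma dq_pos (R : realType) (mu u : R) : 0 < mu -> mu < 1 ->
  u != ln ((1 - mu) / mu) -> 0 < dq mu u.
Proof.
move=> m0 m1 hu.
have hD := D_gt0 u m0 m1.
have hne : (1 - mu) - mu * expR u != 0.
  apply/negP => /eqP h; move/negP: hu; apply; apply/eqP.
  have -> : (1 - mu) / mu = expR u.
    have -> : 1 - mu = mu * expR u by lra.
    field; by rewrite gt_eqF.
  by rewrite expRK.
have hp : 0 < ((1 - mu) - mu * expR u) ^+ 2 by rewrite exprn_even_gt0 //= hne.
have -> : dq mu u = ((1 - mu) - mu * expR u) ^+ 2 / (4 * (D mu u) ^+ 2).
  move: hD; rewrite /dq /D => hD; field; lra.
apply: divr_gt0 => //.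
by apply: mulr_gt0 => //; apply: exprn_gt0.
Qed.

Lemma q0 (R : realType) (mu : R) : q mu 0 = 0.
Proof. by rewrite /q /D expR0 mulr1 mul0r subrK invr1 mulr1; ring. Qed.

Lemma H0 (R : realType) (mu : R) : H mu 0 = 0.
Proof. by rewrite /H /D expR0 mulr1 subrK ln1; ring. Qed.

Lemma H_pos (R : realType) (mu a : R) : 0 < mu -> mu < 1 -> a != 0 ->
  0 < H mu a.
Proof.
move=> m0 m1 a0.
have qinc := incr_except (fun u => q_der u m0 m1)
  (fun u hu => dq_pos m0 m1 hu).
have [an|ap|ae] := ltgtP a 0; last by rewrite ae eqxx in a0.
  rewrite -(H0 mu).
  apply: (decr_der (fun u => H_der u m0 m1)) => // x /andP[_ x0].
  by rewrite -(q0 mu); apply: qinc.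
rewrite -(H0 mu).
apply: (incr_der (fun u => H_der u m0 m1)) => // x /andP[x0 _].
by rewrite -(q0 mu); apply: qinc.
Qed.

Lemma hoef_sum (R : realType) (mu a : R) :
  (1 - mu) * E_hoef mu a 0 + mu * E_hoef mu a 1 =
  D mu a * expR (- (a ^+ 2 / 8 + mu * a)).
Proof.
rewrite /E_hoef /D.
have -> : a * (0 - mu) - a ^+ 2 / 8 = - (a ^+ 2 / 8 + mu * a) by ring.
have -> : expR (a * (1 - mu) - a ^+ 2 / 8) = expR a * expR (- (a ^+ 2 / 8 + mu * a)).
  by rewrite -expRD; congr expR; ring.
ring.
Qed.

Lemma hoef_lt (R : realType) (mu a : R) : 0 < mu -> mu < 1 -> a != 0 ->
  (1 - mu) * E_hoef mu a 0 + mu * E_hoef mu a 1 < 1.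
Proof.
move=> m0 m1 a0.
have hH := H_pos m0 m1 a0.
have hD := D_gt0 a m0 m1.
rewrite hoef_sum.
set t := a ^+ 2 / 8 + mu * a.
have hl : ln (D mu a) < t by move: hH; rewrite /H /t; lra.
have : D mu a < expR t.
  by rewrite -(lnK (x:=D mu a)) ?posrE // ltr_expR.
move=> h.
have e1 : expR t * expR (- t) = 1 by rewrite -expRD subrr expR0.
rewrite -e1 ltr_pM2r //; exact: expR_gt0.
Qed.

Lemma hoef_le (R : realType) (mu a : R) : 0 < mu -> mu < 1 ->
  (1 - mu) * E_hoef mu a 0 + mu * E_hoef mu a 1 <= 1.
Proof.
move=> m0 m1.
have [->|a0] := eqVneq a 0; last exact/ltW/hoef_lt.
rewrite /E_hoef.
have hz : forall x : R, 0 * (x - mu) - 0 ^+ 2 / 8 = 0 by move=> x; ring.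
rewrite !hz expR0; lra.
Qed.

Lemma expR_convex (R : realType) (A B x : R) : 0 <= x <= 1 ->
  expR ((1 - x) * A + x * B) <= (1 - x) * expR A + x * expR B.
Proof.
move=> /andP[x0 x1].
have hA : expR ((1 - x) * A + x * B) * (1 + (A - ((1 - x) * A + x * B))) <= expR A.
  have -> : expR A = expR ((1 - x) * A + x * B) * expR (A - ((1 - x) * A + x * B)).
    by rewrite -expRD; congr expR; ring.
  by apply: ler_wpM2l; [exact/ltW/expR_gt0 | exact: expR_ge1Dx].
have hB : expR ((1 - x) * A + x * B) * (1 + (B - ((1 - x) * A + x * B))) <= expR B.
  have -> : expR B = expR ((1 - x) * A + x * B) * expR (B - ((1 - x) * A + x * B)).
    by rewrite -expRD; congr expR; ring.
  by apply: ler_wpM2l; [exact/ltW/expR_gt0 | exact: expR_ge1Dx].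
have h1 := ler_wpM2l (_ : 0 <= 1 - x) hA.
have h2 := ler_wpM2l x0 hB.
have x1' : 0 <= 1 - x by lra.
move: (h1 x1') h2.
set e := expR ((1 - x) * A + x * B).
move=> h1' h2'.
have -> : e = (1 - x) * (e * (1 + (A - ((1 - x) * A + x * B)))) +
              x * (e * (1 + (B - ((1 - x) * A + x * B)))) by ring.
lra.
Qed.

Lemma le_inv_helper (R : realType) (y x : R) : 0 < y -> y * x <= 1 -> x <= y^-1.
Proof.
move=> y0 h.
have -> : x = y^-1 * (y * x) by field; rewrite gt_eqF.
rewrite -[X in _ <= X]mulr1.
by apply: ler_wpM2l => //; rewrite invr_ge0 ltW.
Qed.

Unset Implicit Arguments.
Theorem proposition2 (R : realType) (X : set R) (mu : R)
  (hXb : borel_set X) (hX01 : X `<=` `[0, 1])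
  (hX0 : X 0) (hX1 : X 1) (hmu0 : 0 < mu) (hmu1 : mu < 1) :
  (forall alpha : R, exists2 lambda : R, I_mu mu lambda &
      forall x, X x -> E_hoef mu alpha x <= E_lin mu lambda x) /\
  (forall lambda : R, I_mu mu lambda -> lambda != 0 ->
      forall alpha : R, exists2 x : R, X x &
        E_hoef mu alpha x < E_lin mu lambda x).
Proof.
split.
- move=> a.
  have hle := hoef_le a hmu0 hmu1.
  have g0p : 0 < E_hoef mu a 0 by exact: expR_gt0.
  have g1p : 0 < E_hoef mu a 1 by exact: expR_gt0.
  move: hle g0p g1p.
  set g0 := E_hoef mu a 0; set g1 := E_hoef mu a 1 => hle g0p g1p.
  exists (g1 - g0).
    rewrite /I_mu /= in_itv /=; apply/andP; split.
      rewrite -[mu - 1]opprB invrN lerNl.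
      apply: le_inv_helper; first lra.
      nra.
    apply: le_inv_helper => //; nra.
  move=> x /hX01; rewrite /= in_itv /= => hx.
  have hc := expR_convex (a * (0 - mu) - a ^+ 2 / 8)
                         (a * (1 - mu) - a ^+ 2 / 8) hx.
  have -> : E_hoef mu a x =
     expR ((1 - x) * (a * (0 - mu) - a ^+ 2 / 8) + x * (a * (1 - mu) - a ^+ 2 / 8)).
    by rewrite /E_hoef; congr expR; ring.
  apply: (le_trans hc).
  change ((1 - x) * g0 + x * g1 <= 1 + (g1 - g0) * (x - mu)).
  move: hx => /andP[x0 x1].
  nra.
- move=> l hl l0 a.
  have [h0|h0] := ltP (E_hoef mu a 0) (E_lin mu l 0); first by exists 0.
  have [h1|h1] := ltP (E_hoef mu a 1) (E_lin mu l 1); first by exists 1.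
  exfalso.
  move: h0 h1; rewrite /E_lin => h0 h1.
  have [a0|a0] := eqVneq a 0.
    move: h0 h1; rewrite a0 /E_hoef.
    have hz : forall x : R, 0 * (x - mu) - 0 ^+ 2 / 8 = 0 by move=> x; ring.
    rewrite !hz expR0 => h0 h1.
    have : l = 0 by apply/le_anti/andP; split; nra.
    by move/eqP; rewrite (negbTE l0).
  have := hoef_lt hmu0 hmu1 a0.
  nra.
Qed.
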